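(* Let $v_1,\dots,v_n\geq 2$ be integers and let $Q$ be the $n\times n$ tridiagonal matrix with diagonal entries $-v_1,\dots,-v_n$ and all super- and sub-diagonal entries equal to $1$. Let $f:\mathbb{R}^n\to\mathbb{R}$, $f(z)=z^TQ^{-1}z$, and let $y=(2-v_1,\dots,2-v_n)$. If $x\in\mathbb{R}^n$ satisfies $|x_i|\leq|y_i|$ for all $i$ with strict inequality for at least one $i$, then $f(x)>f(y)$. *)

(* Defs.v *)
From mathcomp Require Import all_boot all_order all_algebra.
Set Implicit Arguments. Unset Strict Implicit. Unset Printing Implicit Defensive.
Import Order.TTheory GRing.Theory Num.Theory.
Local Open Scope ring_scope.

Definition tridiagQ (R : ringType) (n : nat) (v : 'I_n -> nat) : 'M[R]_n :=
  \matrix_(i < n, j < n)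
    if i == j then - (v i)%:R
    else if ((i.+1 == j)%N || (j.+1 == i)%N) then 1 else 0.

Definition quadf (R : fieldType) (n : nat) (v : 'I_n -> nat) (z : 'cV[R]_n) : R :=
  ((z^T *m invmx (tridiagQ R v) *m z) 0 0).

Definition yvec (R : ringType) (n : nat) (v : 'I_n -> nat) : 'cV[R]_n :=
  \col_(i < n) (2 - (v i)%:R).

(* Main.v *)
Require Import Defs.
From mathcomp Require Import all_boot all_order all_algebra.
From mathcomp Require Import zify lra.
Import Order.TTheory GRing.Theory Num.Theory.
Local Open Scope ring_scope.

Section Aux.
Variable R : realFieldType.

Lemma sum_if_uniq n (P : pred 'I_n) (g : 'I_n -> R) j0 :
  P j0 -> (forall j, P j -> j = j0) ->
  \sum_j (if P j then g j else 0) = g j0.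
Proof.
move=> Pj0 Hu; rewrite (bigD1 j0) //= Pj0 big1 ?addr0 // => j /negP nj.
case: ifP => // Pj; exfalso; apply: nj; apply/eqP; exact: Hu.
Qed.

Lemma sum_if_none n (P : pred 'I_n) (g : 'I_n -> R) :
  (forall j, ~~ P j) -> \sum_j (if P j then g j else 0) = 0.
Proof. by move=> H; rewrite big1 // => j _; rewrite (negbTE (H j)). Qed.

Lemma Qrow n (v : 'I_n -> nat) (i : 'I_n) (g : 'I_n -> R) :
  \sum_j tridiagQ R v i j * g j =
  - (v i)%:R * g i + \sum_(j : 'I_n) (if (i.+1 == j)%N then g j else 0)
    + \sum_(j : 'I_n) (if (j.+1 == i)%N then g j else 0).
Proof.
have E := @sum_if_uniq n (fun j : 'I_n => j == i) g i (eqxx i) (fun j (h : j == i) => eqP h).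
rewrite -E mulr_sumr.
rewrite -!big_split /=; apply: eq_bigr => j _; rewrite mxE.
have [->|nij] := eqVneq i j.
  by rewrite !(gtn_eqF (ltnSn _)) !addr0.
rewrite mulr0 add0r.
case e1: (i.+1 == j)%N; case e2: (j.+1 == i)%N => /=.
- by move/eqP: e1; move/eqP: e2; lia.
- by rewrite mul1r addr0.
- by rewrite mul1r add0r.
- by rewrite mul0r addr0.
Qed.

Lemma minpr n (v : 'I_n -> nat) (hv : forall i, (2 <= v i)%N) (u : 'cV[R]_n) :
  (forall i, (tridiagQ R v *m u) i 0 <= 0) -> forall i, 0 <= u i 0.
Proof.
move=> H i0; rewrite leNgt; apply/negP => hneg.
pose F : 'I_n -> R := fun i => u i 0.
have [i1 _ min1] := @arg_minP _ _ _ i0 predT F isT.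
set m := F i1 in min1.
have mlt : m < 0 by apply: le_lt_trans (min1 i0 isT) hneg.
have [i Pi maxi] := @arg_maxP _ _ _ i1 (fun j => F j == m) (fun j : 'I_n => (j : nat)) (eqxx m).
move/eqP: Pi => Pi.
have := H i; rewrite mxE (@Qrow n v i F) Pi.
have hr : m < \sum_(j : 'I_n) (if (i.+1 == j)%N then F j else 0).
  case: (ltnP i.+1 n) => hin.
    rewrite (@sum_if_uniq n (fun j : 'I_n => (i.+1 == j)%N) F (Ordinal hin)) /=; last 2 first.
    - exact: eqxx.
    - by move=> j /eqP e; apply: val_inj; rewrite /= e.
    rewrite lt_neqAle min1 // andbT; apply/negP => /eqP e.
    have := maxi (Ordinal hin) (introT eqP (esym e)); rewrite /=.
    by rewrite leEnat ltnn.
  rewrite sum_if_none // => j; apply/negP => /eqP e.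
  by have := ltn_ord j; rewrite -e; lia.
have hl : m <= \sum_(j : 'I_n) (if (j.+1 == i)%N then F j else 0).
  case: (posnP i) => hi.
    rewrite sum_if_none ?ltW // => j; apply/negP => /eqP e; lia.
  have hin : (i.-1 < n)%N by have := ltn_ord i; lia.
  rewrite (@sum_if_uniq n (fun j : 'I_n => (j.+1 == i)%N) F (Ordinal hin)) /=; last 2 first.
  - by apply/eqP; lia.
  - by move=> j /eqP e; apply: val_inj; rewrite /=; lia.
  exact: min1.
have hvi : 2 <= (v i)%:R :> R by rewrite (ler_nat R 2).
have : 0 <= (2 - (v i)%:R) * m by rewrite mulr_le0 //; lra.
lra.
Qed.

Lemma sum_lt_one n (F G : 'I_n -> R) k :
  (forall i, F i <= G i) -> F k < G k -> \sum_i F i < \sum_i G i.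
Proof.
move=> hle hlt; rewrite (bigD1 k) // [X in _ < X](bigD1 k) //=.
by apply: ltr_leD => //; apply: ler_sum => i _.
Qed.
End Aux.

Lemma Qsym (R : realFieldType) n (v : 'I_n -> nat) : (tridiagQ R v)^T = tridiagQ R v.
Proof.
apply/matrixP => i j; rewrite !mxE eq_sym orbC.
by case: eqVneq => // ->.
Qed.

Lemma Qunit (R : realFieldType) n (v : 'I_n -> nat) (hv : forall i, (2 <= v i)%N) :
  tridiagQ R v \in unitmx.
Proof.
rewrite unitmxE unitfE; apply/det0P => [[w wn0 wQ]].
have hQ : tridiagQ R v *m w^T = 0.
  by rewrite -{1}Qsym -trmx_mul wQ trmx0.
have h1 : forall i, 0 <= w^T i 0 by apply: (@minpr R n v hv) => i; rewrite hQ mxE.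
have h2 : forall i, 0 <= (- w^T) i 0 by apply: (@minpr R n v hv) => i; rewrite mulmxN hQ oppr0 mxE.
move/negP: wn0; apply; apply/eqP/matrixP => i j.
rewrite (ord1 i) mxE; apply/eqP; rewrite eq_le.
have := h1 j; have := h2 j; rewrite !mxE; lra.
Qed.

Theorem proposition3p5 (R : realFieldType) (n : nat) (v : 'I_n -> nat)
  (hv : forall i, (2 <= v i)%N) (x : 'cV[R]_n)
  (hle : forall i, `|x i 0| <= `|yvec R v i 0|)
  (hlt : exists i, `|x i 0| < `|yvec R v i 0|) :
  quadf v x > quadf v (yvec R v).
Proof.
set Q := tridiagQ R v.
have hU : Q \in unitmx by exact: Qunit.
set N := - invmx Q.
have hQN : Q *m N = - 1%:M by rewrite mulmxN mulmxV.
have hN : forall i j, 0 <= N i j.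
  move=> i j.
  suff : 0 <= (\col_k N k j) i 0 by rewrite mxE.
  apply: (@minpr R n v hv) => k.
  have -> : (Q *m \col_k N k j) k 0 = (Q *m N) k j.
    by rewrite !mxE; apply: eq_bigr => l _; rewrite !mxE.
  by rewrite hQN !mxE oppr_le0 ler0n.
have hNd : forall j, 0 < N j j.
  move=> j; have : (Q *m N) j j = -1 by rewrite hQN !mxE eqxx.
  rewrite mxE (@Qrow R n v j (fun l => N l j)).
  have h1 : 0 <= \sum_(l : 'I_n) (if (j.+1 == l)%N then N l j else 0).
    by apply: sumr_ge0 => l _; case: ifP.
  have h2 : 0 <= \sum_(l : 'I_n) (if (l.+1 == j)%N then N l j else 0).
    by apply: sumr_ge0 => l _; case: ifP.
  have hvj : 0 <= (v j)%:R :> R by [].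
  move=> e; rewrite lt_neqAle hN andbT; apply/negP => /eqP e0.
  move: e; rewrite -e0 mulr0 add0r; lra.
have hq : forall z : 'cV[R]_n,
    quadf v z = - \sum_j \sum_i z i 0 * N i j * z j 0.
  move=> z; rewrite /quadf mxE -sumrN; apply: eq_bigr => j _.
  rewrite mxE mulr_suml -sumrN; apply: eq_bigr => i _.
  rewrite !mxE mulrN mulNr; exact: (esym (opprK _)).
set y := yvec R v.
have hy : forall i, y i 0 = - `|y i 0|.
  move=> i; rewrite ler0_norm ?opprK // /y mxE subr_le0.
  by rewrite (ler_nat R 2); apply: hv.
have key : forall i j, x i 0 * N i j * x j 0 <= y i 0 * N i j * y j 0.
  move=> i j; apply: le_trans (ler_norm _) _.
  rewrite !normrM (ger0_norm (hN i j)) (hy i) (hy j) !mulrN !mulNr opprK.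
  apply: ler_pM; [by rewrite mulr_ge0 | by [] | | exact: hle].
  by apply: ler_pM; [by [] | exact: hN | exact: hle | by []].
case: hlt => k hk.
rewrite !hq ltrN2.
apply: (@sum_lt_one R n _ _ k) => [j|].
  by apply: ler_sum => i _; apply: key.
apply: (@sum_lt_one R n _ _ k) => [i|]; first exact: key.
rewrite (hy k) !mulrN !mulNr opprK.
apply: le_lt_trans (ler_norm _) _.
rewrite !normrM (ger0_norm (hN k k)).
have := hNd k; have := normr_ge0 (x k 0); move: hk.
set a := `|x k 0|; set b := `|y k 0|; set c := N k k => hab ha hc.
have : 0 < c * (b - a) * (b + a) by rewrite !mulr_gt0 // ?subr_gt0 //; lra.
lra.
Qed.
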